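(* Let $m,n,k\ge0$ with $k\ge n$. The $(A_{m+k-n},A_k)$-bimodule $A_{m+k-n}\otimes_{A_{k-n}}A_k$ is indecomposable.
   Context: $A_j$ is the nilCoxeter algebra: the unital $\mathbb{Q}$-algebra generated by $Y_1,\dots,Y_{j-1}$ with relations $Y_i^2=0$, $Y_iY_l=Y_lY_i$ for $|i-l|>1$, $Y_iY_{i+1}Y_i=Y_{i+1}Y_iY_{i+1}$. For $a\le b$, $A_a$ is viewed as a subalgebra of $A_b$ via $Y_i\mapsto Y_i$. In the tensor product, $A_{m+k-n}$ is a right $A_{k-n}$-module and $A_k$ a left $A_{k-n}$-module via these inclusions; the bimodule structure comes from left multiplication by $A_{m+k-n}$ and right multiplication by $A_k$. *)

(* Defs.v *)
From HB Require Import structures.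
From mathcomp Require Import all_boot all_order all_algebra all_fingroup.
Set Implicit Arguments. Unset Strict Implicit. Unset Printing Implicit Defensive.
Import Order.TTheory GRing.Theory Num.Theory.
Local Open Scope ring_scope.

(* The nilCoxeter algebra A_j over Q, realised on its standard basis          *)

Definition perm_len (j : nat) (w : 'S_j) : nat :=
  #|[set ij : 'I_j * 'I_j | (ij.1 < ij.2)%N && (w ij.2 < w ij.1)%N]|.

Definition NCA (j : nat) := {ffun 'S_j -> rat^o}.

Definition NCY (j : nat) (w : 'S_j) : NCA j := [ffun u => (u == w)%:R].

Definition NCmul (j : nat) (x y : NCA j) : NCA j :=
  \sum_(u : 'S_j) \sum_(v : 'S_j)
     (x u * y v) *: (if perm_len (u * v)%g == (perm_len u + perm_len v)%N
                     then NCY (u * v)%g else 0).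

(* simple reflection s_i and generator Y_i (i < j-1, 0-based) *)
Definition NCgen (j : nat) (i : nat) : NCA j :=
  match j return NCA j with
  | 0 => 0
  | j'.+1 => if (i.+1 < j'.+1)%N
             then NCY (tperm (inord i : 'I_j'.+1) (inord i.+1)) else 0
  end.

Definition perm_ext_fun (a b : nat) (h : (a <= b)%N) (s : 'S_a) (i : 'I_b) : 'I_b :=
  if insub (val i) : option 'I_a is Some i' then widen_ord h (s i') else i.

Lemma perm_ext_inj (a b : nat) (h : (a <= b)%N) (s : 'S_a) :
  injective (perm_ext_fun h s).
Proof.
move=> i j; rewrite /perm_ext_fun.
case: insubP => [i' Hi Ei|Hi]; case: insubP => [j' Hj Ej|Hj] //=.
- move/(congr1 val) => /= /val_inj /perm_inj Eij.
  by apply: val_inj; rewrite -Ei -Ej Eij.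
- by move=> E; move: Hj; rewrite -E /= ltn_ord.
- by move=> E; move: Hi; rewrite E /= ltn_ord.
Qed.

Definition perm_ext (a b : nat) (h : (a <= b)%N) (s : 'S_a) : 'S_b :=
  perm (@perm_ext_inj a b h s).

Definition NCincl (a b : nat) (h : (a <= b)%N) (x : NCA a) : NCA b :=
  \sum_(w : 'S_a) x w *: NCY (perm_ext h w).

(* The Q-tensor product A_p (x)_Q A_k, on the basis Y_u (x) Y_v.             *)
Definition NCtens (p k : nat) := {ffun 'S_p * 'S_k -> rat^o}.

Definition tens (p k : nat) (x : NCA p) (y : NCA k) : NCtens p k :=
  [ffun uv => x uv.1 * y uv.2].

Definition tens_lact (p k : nat) (a : NCA p) (t : NCtens p k) : NCtens p k :=
  \sum_(uv : 'S_p * 'S_k) t uv *: tens (NCmul a (NCY uv.1)) (NCY uv.2).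
Definition tens_ract (p k : nat) (t : NCtens p k) (b : NCA k) : NCtens p k :=
  \sum_(uv : 'S_p * 'S_k) t uv *: tens (NCY uv.1) (NCmul (NCY uv.2) b).

Section Bimod.
Variables (V : lmodType rat) (A B : Type) (L : A -> V -> V) (R : V -> B -> V).

Definition subspace (U : V -> Prop) : Prop :=
  [/\ U 0, (forall x y, U x -> U y -> U (x + y)) & (forall (c : rat) x, U x -> U (c *: x))].

Definition span (G : V -> Prop) : V -> Prop :=
  fun x => forall U, subspace U -> (forall g, G g -> U g) -> U x.

Definition subbimod (U : V -> Prop) : Prop :=
  [/\ subspace U, (forall a x, U x -> U (L a x)) & (forall x b, U x -> U (R x b))].

(* For a sub-bimodule W of V, "the bimodule V / W is indecomposable":
   V / W is nonzero, and whenever V / W = U1/W (+) U2/W (internal direct sum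
   of sub-bimodules, which correspond to sub-bimodules U1, U2 of V containing
   W), one of the summands U1/W, U2/W is zero. *)
Definition quot_indecomposable (W : V -> Prop) : Prop :=
  (exists x, ~ W x) /\
  forall U1 U2 : V -> Prop,
    subbimod U1 -> subbimod U2 ->
    (forall w, W w -> U1 w) -> (forall w, W w -> U2 w) ->
    (forall x, exists x1 x2, [/\ U1 x1, U2 x2 & x = x1 + x2]) ->
    (forall x, U1 x -> U2 x -> W x) ->
    (forall x, U1 x -> W x) \/ (forall x, U2 x -> W x).
End Bimod.

Definition tens_over_rel (p q k : nat) (hp : (q <= p)%N) (hk : (q <= k)%N)
    : NCtens p k -> Prop :=
  span (fun t : NCtens p k => exists (x : NCA p) (c : NCA q) (y : NCA k),
          t = tens (NCmul x (NCincl hp c)) y - tens x (NCmul (NCincl hk c) y)).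

Definition tensor_bimod_indecomposable (p q k : nat) (hp : (q <= p)%N) (hk : (q <= k)%N)
    : Prop :=
  quot_indecomposable (@tens_lact p k) (@tens_ract p k) (tens_over_rel hp hk).

Lemma le_kn_mkn (m n k : nat) : (k - n <= m + k - n)%N.
Proof. by apply: leq_sub2r; apply: leq_addl. Qed.

(* Main.v *)
Require Import Defs.
From HB Require Import structures.
From mathcomp Require Import all_boot all_order all_algebra all_fingroup.
From mathcomp Require Import zify.
Set Implicit Arguments. Unset Strict Implicit. Unset Printing Implicit Defensive.
Import Order.TTheory GRing.Theory Num.Theory.
Local Open Scope ring_scope.

Lemma sum_only (T : finType) (V : nmodType) (a : T) (F : T -> V) :
  (forall i, i != a -> F i = 0) -> \sum_i F i = F a.
Proof. by move=> H; rewrite (bigD1 a) //= big1 ?addr0 // => i /H. Qed.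

Lemma perm_len1 j : perm_len (1%g : 'S_j) = 0%N.
Proof.
apply/eqP; rewrite cards_eq0; apply/eqP/setP => [[i l]].
rewrite !inE /= !perm1; apply/negbTE/andP => [[a b]]; move: (ltn_trans a b); by rewrite ltnn.
Qed.

Lemma mono_ge j (s : 'S_j) : (forall i l : 'I_j, (i < l)%N -> (s i < s l)%N) ->
  forall i : 'I_j, (i <= s i)%N.
Proof.
move=> mono; case=> i; elim: i => [|i IH] Hi //=.
have Hi' : (i < j)%N by apply: ltnW.
have := mono (Ordinal Hi') (Ordinal Hi) (ltnSn i).
by have := IH Hi'; apply: leq_ltn_trans.
Qed.

Lemma perm_len0 j (w : 'S_j) : perm_len w = 0%N -> w = 1%g.
Proof.
move=> /eqP; rewrite cards_eq0 => /eqP A0.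
have mono : forall i l : 'I_j, (i < l)%N -> (w i < w l)%N.
  move=> i l il; have := in_set0 (i, l); rewrite -A0 inE /= il /= => /negbT.
  rewrite -leqNgt leq_eqVlt => /orP[/eqP/val_inj/perm_inj E|//].
  by move: il; rewrite E ltnn.
have monoi : forall i l : 'I_j, (i < l)%N -> ((w^-1)%g i < (w^-1)%g l)%N.
  move=> i l il; rewrite ltnNge leq_eqVlt; apply/negP => /orP[/eqP/val_inj E|].
    by move: il; rewrite -(permKV w i) -E permKV ltnn.
  by move/mono; rewrite !permKV => /(ltn_trans il); by rewrite ltnn.
apply/permP => i; apply/val_inj; rewrite perm1 /=; apply/eqP; rewrite eqn_leq.
have := mono_ge monoi (w i); rewrite permK => ->.
by rewrite (mono_ge mono).
Qed.

Lemma perm_len_le j (w : 'S_j) : (perm_len w <= j * j)%N.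
Proof. by rewrite /perm_len (leq_trans (max_card _)) // card_prod card_ord. Qed.

Lemma perm_ext1 a b (h : (a <= b)%N) : perm_ext h 1%g = 1%g.
Proof.
apply/permP => i; rewrite perm1 /perm_ext permE /perm_ext_fun.
case: insubP => [i' _ Ei|//]; apply/val_inj; by rewrite /= perm1.
Qed.

Lemma perm_ext_eq1 a b (h : (a <= b)%N) w : perm_ext h w = 1%g -> w = 1%g.
Proof.
move=> E; apply/permP => i; rewrite perm1.
have := congr1 (fun s : 'S_b => s (widen_ord h i)) E; rewrite perm1 /perm_ext permE /perm_ext_fun /=.
case: insubP => [i' _ Ei|]; last by rewrite /= ltn_ord.
have -> : i' = i by apply: val_inj.
by move/(congr1 val) => /= /val_inj.
Qed.

Lemma NCYE j (w u : 'S_j) : NCY w u = (u == w)%:R.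
Proof. by rewrite ffunE. Qed.

Lemma NCmulY j (u v : 'S_j) : NCmul (NCY u) (NCY v) =
  if perm_len (u * v)%g == (perm_len u + perm_len v)%N then NCY (u * v)%g else 0.
Proof.
rewrite /NCmul (sum_only (a:=u)) => [|u' Hu']; last first.
  by apply: big1 => v' _; rewrite NCYE (negbTE Hu') mul0r scale0r.
rewrite (sum_only (a:=v)) => [|v' Hv']; last by rewrite !NCYE (negbTE Hv') mulr0 scale0r.
by rewrite !NCYE !eqxx mulr1 scale1r.
Qed.

Lemma cond1 j (u v : 'S_j) :
  ((if perm_len (u * v)%g == (perm_len u + perm_len v)%N then NCY (u * v)%g else 0) : NCA j) 1%g
  = ((u == 1%g) && (v == 1%g))%:R.
Proof.
case: ifP => c.
  rewrite NCYE; case: eqP => [E|NE].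
    move: c; rewrite -E perm_len1 => /eqP/esym/eqP; rewrite addn_eq0 => /andP[/eqP/perm_len0 -> /eqP/perm_len0 ->].
    by rewrite !eqxx.
  case: eqP => [Eu|//]; case: eqP => [Ev|//]; by move: NE; rewrite Eu Ev mulg1.
rewrite ffunE; case: eqP => [Eu|//]; case: eqP => [Ev|//].
by move: c; rewrite Eu Ev mulg1 perm_len1 eqxx.
Qed.

Lemma NCmul1 j (x y : NCA j) : NCmul x y 1%g = x 1%g * y 1%g.
Proof.
rewrite /NCmul sum_ffunE (sum_only (a:=1%g)) => [|u Hu]; last first.
  rewrite sum_ffunE big1 // => v _; rewrite ffunE cond1 (negbTE Hu) /=.
  by rewrite ?mulr0 ?scaler0.
rewrite sum_ffunE (sum_only (a:=1%g)) => [|v Hv]; last first.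
  by rewrite ffunE cond1 (negbTE Hv) andbF /= ?mulr0 ?scaler0.
rewrite ffunE cond1 !eqxx /=; exact: mulr1.
Qed.
Lemma NCincl1 a b (h : (a <= b)%N) (c : NCA a) : NCincl h c 1%g = c 1%g.
Proof.
rewrite /NCincl sum_ffunE (sum_only (a:=1%g)) => [|w Hw]; last first.
  rewrite ffunE NCYE; case: eqP => [E|]; last by rewrite ?mulr0 ?scaler0.
  by move: Hw; rewrite (perm_ext_eq1 (esym E)) eqxx.
rewrite ffunE NCYE perm_ext1 eqxx; exact: mulr1.
Qed.

Definition EE p k (a : 'S_p) (b : 'S_k) : NCtens p k := tens (NCY a) (NCY b).

Lemma EEE p k (a : 'S_p) (b : 'S_k) uv : EE a b uv = (uv == (a, b))%:R.
Proof.
case: uv => u v; rewrite /EE /tens ffunE !NCYE /= xpair_eqE.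
by case: (u == a); case: (v == b); rewrite /= ?mulr0 ?mulr1.
Qed.

Lemma tensE p k (t : NCtens p k) : t = \sum_ab t ab *: EE ab.1 ab.2.
Proof.
apply/ffunP => uv; rewrite sum_ffunE (sum_only (a:=uv)) => [|ab H].
  rewrite ffunE EEE -surjective_pairing eqxx; exact: (esym (mulr1 _)).
rewrite ffunE EEE -surjective_pairing eq_sym (negbTE H); exact: mulr0.
Qed.

Lemma tens0l p k (y : NCA k) : tens (0 : NCA p) y = 0.
Proof. by apply/ffunP => uv; rewrite !ffunE mul0r. Qed.
Lemma tens0r p k (x : NCA p) : tens x (0 : NCA k) = 0.
Proof. by apply/ffunP => uv; rewrite !ffunE mulr0. Qed.

Lemma ract0 p k (y : NCA k) : tens_ract (0 : NCtens p k) y = 0.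
Proof. by rewrite /tens_ract big1 // => uv _; rewrite ffunE scale0r. Qed.

Lemma ractE p k (a : 'S_p) (b : 'S_k) y :
  tens_ract (EE a b) y = tens (NCY a) (NCmul (NCY b) y).
Proof.
rewrite /tens_ract (sum_only (a:=(a,b))) => [|uv H]; last by rewrite EEE (negbTE H) scale0r.
by rewrite EEE eqxx scale1r.
Qed.

Lemma ract_sum (I : finType) p k (c : I -> rat) (T : I -> NCtens p k) y :
  tens_ract (\sum_i c i *: T i) y = \sum_i c i *: tens_ract (T i) y.
Proof.
rewrite /tens_ract. under eq_bigr => uv _ do rewrite sum_ffunE scaler_suml.
rewrite exchange_big; apply: eq_bigr => i _; rewrite scaler_sumr; apply: eq_bigr => uv _.
by rewrite ffunE scalerA.
Qed.

Definition GG p k (u : 'S_p) (v : 'S_k) (ab : 'S_p * 'S_k) : NCtens p k :=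
  if (perm_len (u * ab.1)%g == (perm_len u + perm_len ab.1)%N) &&
     (perm_len (ab.2 * v)%g == (perm_len ab.2 + perm_len v)%N)
  then EE (u * ab.1)%g (ab.2 * v)%g else 0.

Lemma lr_act p k (u : 'S_p) (v : 'S_k) (x : NCtens p k) :
  tens_ract (tens_lact (NCY u) x) (NCY v) = \sum_ab x ab *: GG u v ab.
Proof.
have -> : tens_lact (NCY u) x = \sum_ab x ab *:
   (if perm_len (u * ab.1)%g == (perm_len u + perm_len ab.1)%N then EE (u * ab.1)%g ab.2 else 0).
  rewrite /tens_lact; apply: eq_bigr => ab _; rewrite NCmulY.
  by case: ifP; rewrite ?tens0l.
rewrite ract_sum; apply: eq_bigr => ab _; rewrite /GG.
case: ifP => c1 /=; last by rewrite ract0.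
by rewrite ractE NCmulY; case: ifP; rewrite ?tens0r.
Qed.

Lemma sub_sum p k (U : NCtens p k -> Prop) (I : finType) (P : pred I) (F : I -> NCtens p k) :
  subspace U -> (forall i, P i -> U (F i)) -> U (\sum_(i | P i) F i).
Proof. case=> U0 UD _ H; exact: (big_ind U U0 UD H). Qed.

Lemma key p k (U : NCtens p k -> Prop) x :
  subbimod (@tens_lact p k) (@tens_ract p k) U -> U x -> x (1%g,1%g) != 0 -> forall t, U t.
Proof.
case=> [[U0 UD UZ] UL UR] Ux x11.
pose B := (p * p + k * k).+1.
have claim : forall n (u : 'S_p) (v : 'S_k), (B <= perm_len u + perm_len v + n)%N -> U (EE u v).
  elim=> [|n IH] u v HB.
    exfalso; move: HB; rewrite addn0 ltnNge => /negP; apply.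
    exact: leq_add (perm_len_le u) (perm_len_le v).
  have Hz := UR _ (NCY v) (UL (NCY u) _ Ux).
  rewrite lr_act (bigD1 (1%g,1%g)) //= in Hz.
  have Hr : U (\sum_(ab | ab != (1%g,1%g)) x ab *: GG u v ab).
    apply: sub_sum => [|ab Hab]; first by split.
    apply: UZ; rewrite /GG; case: ifP => [/andP[/eqP c1 /eqP c2]|_ //].
    apply: IH; rewrite c1 c2.
    have : (0 < perm_len ab.1 + perm_len ab.2)%N.
      rewrite lt0n addn_eq0; apply/negP => /andP[/eqP/perm_len0 h1 /eqP/perm_len0 h2].
      by move: Hab; rewrite -h1 -h2 -surjective_pairing eqxx.
    move: HB; rewrite /B; move: (p * p + k * k) (perm_len u) (perm_len v) (perm_len ab.1) (perm_len ab.2) => P a0 b0 c0 d0; lia.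
  have HE : U (x (1%g,1%g) *: EE u v).
    have := UD _ _ Hz (UZ (-1) _ Hr); rewrite scaleN1r addrK.
    by rewrite /GG /= mulg1 mul1g !perm_len1 addn0 add0n !eqxx.
  by have := UZ (x (1%g,1%g))^-1 _ HE; rewrite scalerA mulVf // scale1r.
move=> t; rewrite (tensE t); apply: sub_sum => [|ab _]; first by split.
by apply: UZ; apply: (claim B); rewrite leq_addl.
Qed.

Theorem general p q k (hp : (q <= p)%N) (hk : (q <= k)%N) :
  tensor_bimod_indecomposable hp hk.
Proof.
split.
  exists (EE 1%g 1%g) => HW.
  have : (EE (1%g : 'S_p) (1%g : 'S_k)) (1%g, 1%g) = 0.
    apply: (HW (fun t : NCtens p k => t (1%g, 1%g) = 0)).
      split; first by rewrite ffunE.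
        by move=> a b Ha Hb; rewrite ffunE Ha Hb addr0.
      by move=> c a Ha; rewrite ffunE Ha; exact: mulr0.
    move=> g [x [c [y ->]]].
    by rewrite !ffunE /= !NCmul1 !NCincl1 mulrA subrr.
  by rewrite EEE eqxx => /eqP; rewrite oner_eq0.
move=> U1 U2 H1 H2 _ _ Hdec Hcap.
have [x1 [x2 [Ux1 Ux2 E]]] := Hdec (EE 1%g 1%g).
have := congr1 (fun t : NCtens p k => t (1%g, 1%g)) E; rewrite /= EEE eqxx ffunE.
case: (eqVneq (x1 (1%g, 1%g)) 0) => [-> | nz].
  rewrite add0r => e; left => x Hx; apply: Hcap => //.
  by apply: (key H2 Ux2); rewrite -e oner_eq0.
by move=> _; right => x Hx; apply: Hcap => //; apply: (key H1 Ux1).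
Qed.

Theorem mainTheorem8 (m n k : nat) (hnk : (n <= k)%N) :
  tensor_bimod_indecomposable (le_kn_mkn m n k) (leq_subr n k).
Proof. exact: general. Qed.
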